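(* Let $A\in\mathbb{R}^{n\times n}$, $B\in\mathbb{R}^{n\times r}$, $j_{\max}\ge1$, $0<\varepsilon<1$, and shifts $\alpha_1,\ldots,\alpha_{j_{\max}}\in\mathbb{C}$ with $\mathrm{Re}(\alpha_j)<0$, $A+\alpha_jI$ nonsingular, and $\|\mathcal{C}_j\|<1$ for $j=1,\ldots,j_{\max}$. Run the inexact LR-ADI iteration (with $M=I$) of the context, and suppose that for all $1\le k\le j_{\max}$ $$\|s_k\|\le\tfrac12\Big(\sqrt{\|w_{k-1}\|^2+\tfrac{2\varepsilon}{\sigma_k\gamma_k^2j_{\max}}}-\|w_{k-1}\|\Big),\qquad \sigma_k:=\|(A+\alpha_kI)^{-1}\|.$$ Then $\|\mathcal{R}^{\mathrm{comp}}_{j_{\max}}\|\le\|\mathcal{R}^{\mathrm{exact}}_{j_{\max}}\|+\varepsilon$.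
   Context: $\mathcal{C}_k:=(A+\alpha_kI)^{-1}(A-\overline{\alpha_k}I)$. Inexact LR-ADI iteration: $w_0:=B$, $\gamma_k:=\sqrt{-2\,\mathrm{Re}(\alpha_k)}$; $v_k$ arbitrary with $s_k:=w_{k-1}-(A+\alpha_kI)v_k$, $w_k:=w_{k-1}+\gamma_k^2v_k$. Computed residual $\mathcal{R}^{\mathrm{comp}}_k:=w_kw_k^*$. Exact LR-ADI residual (all $s_k=0$, same shifts): $\mathcal{R}^{\mathrm{exact}}_k:=w^{\mathrm{exact}}_k(w^{\mathrm{exact}}_k)^*$ with $w^{\mathrm{exact}}_k:=\mathcal{C}_k\cdots\mathcal{C}_1B$. Norms are spectral. *)

(* Defs.v *)
From HB Require Import structures.
From mathcomp Require Import all_boot all_order all_algebra.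
From mathcomp Require Import complex.
From mathcomp Require Import boolp classical_sets reals.
Set Implicit Arguments. Unset Strict Implicit. Unset Printing Implicit Defensive.
Import Order.TTheory GRing.Theory Num.Theory.
Local Open Scope ring_scope.

Definition vnorm (R : realType) (p : nat) (x : 'cV[R[i]]_p) : R :=
  Num.sqrt (\sum_(i < p) (complex.Re (x i 0) ^+ 2 + complex.Im (x i 0) ^+ 2)).

Definition specnorm (R : realType) (m p : nat) (M : 'M[R[i]]_(m, p)) : R :=
  sup [set t : R | exists x : 'cV[R[i]]_p, vnorm x <= 1 /\ t = vnorm (M *m x)].

Definition ctrans (R : realType) (m p : nat) (M : 'M[R[i]]_(m, p)) : 'M[R[i]]_(p, m) :=
  map_mx (@conjc R) M^T.

Definition cmx (R : realType) (m p : nat) (M : 'M[R]_(m, p)) : 'M[R[i]]_(m, p) :=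
  map_mx (fun x : R => (x%:C)%C) M.

Definition shiftA (R : realType) (n : nat) (A : 'M[R]_n) (alpha : R[i]) : 'M[R[i]]_n :=
  cmx A + alpha%:M.

Definition cayley (R : realType) (n : nat) (A : 'M[R]_n) (alpha : R[i]) : 'M[R[i]]_n :=
  invmx (shiftA A alpha) *m (cmx A - (conjc alpha)%:M).

Definition gam (R : realType) (alpha : R[i]) : R := Num.sqrt (- 2 * complex.Re alpha).

Fixpoint w_inex (R : realType) (n r : nat) (B : 'M[R]_(n, r)) (alpha : nat -> R[i])
    (v : nat -> 'M[R[i]]_(n, r)) (k : nat) : 'M[R[i]]_(n, r) :=
  match k with
  | 0 => cmx B
  | k'.+1 => w_inex B alpha v k' + ((gam (alpha k) ^+ 2)%:C)%C *: v k
  end.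

(* residual of the linear solve at step k >= 1:  s_k = w_{k-1} - (A + alpha_k I) v_k *)
Definition s_res (R : realType) (n r : nat) (A : 'M[R]_n) (B : 'M[R]_(n, r))
    (alpha : nat -> R[i]) (v : nat -> 'M[R[i]]_(n, r)) (k : nat) : 'M[R[i]]_(n, r) :=
  w_inex B alpha v k.-1 - shiftA A (alpha k) *m v k.

Fixpoint w_exact (R : realType) (n r : nat) (A : 'M[R]_n) (B : 'M[R]_(n, r))
    (alpha : nat -> R[i]) (k : nat) : 'M[R[i]]_(n, r) :=
  match k with
  | 0 => cmx B
  | k'.+1 => cayley A (alpha k) *m w_exact A B alpha k'
  end.

(* Main.v *)
Require Import Defs.
From HB Require Import structures.
From mathcomp Require Import all_boot all_order all_algebra.
From mathcomp Require Import complex.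
From mathcomp Require Import boolp classical_sets reals.
From mathcomp Require Import ring lra.
Set Implicit Arguments. Unset Strict Implicit. Unset Printing Implicit Defensive.
Import Order.TTheory GRing.Theory Num.Theory.
Local Open Scope ring_scope.

Section S.
Variable R : realType.
Implicit Types (z : R[i]).

Lemma ReD z1 z2 : complex.Re (z1 + z2) = complex.Re z1 + complex.Re z2.
Proof. by case: z1; case: z2. Qed.
Lemma ImD z1 z2 : complex.Im (z1 + z2) = complex.Im z1 + complex.Im z2.
Proof. by case: z1; case: z2. Qed.
Lemma ReM z1 z2 : complex.Re (z1 * z2) = complex.Re z1 * complex.Re z2 - complex.Im z1 * complex.Im z2.
Proof. by case: z1; case: z2. Qed.
Lemma ImM z1 z2 : complex.Im (z1 * z2) = complex.Re z1 * complex.Im z2 + complex.Im z1 * complex.Re z2.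
Proof. by case: z1 => a b; case: z2 => c d /=; ring. Qed.
Lemma ReJ z : complex.Re (conjc z) = complex.Re z. Proof. by case: z. Qed.
Lemma ImJ z : complex.Im (conjc z) = - complex.Im z. Proof. by case: z. Qed.
Lemma ReC (t : R) : complex.Re (t%:C)%C = t. Proof. by []. Qed.
Lemma ImC (t : R) : complex.Im (t%:C)%C = 0. Proof. by []. Qed.
Lemma Re0 : complex.Re (0 : R[i]) = 0. Proof. by []. Qed.
Lemma Im0 : complex.Im (0 : R[i]) = 0. Proof. by []. Qed.

Definition nz (z : R[i]) : R := complex.Re z ^+ 2 + complex.Im z ^+ 2.
Lemma nz_ge0 z : 0 <= nz z.
Proof. by rewrite /nz addr_ge0 // sqr_ge0. Qed.

Section V.
Variable p : nat.
Implicit Types x y : 'cV[R[i]]_p.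
Definition ns x : R := \sum_(i < p) nz (x i 0).
Definition ip x y : R := \sum_(i < p) (complex.Re (x i 0) * complex.Re (y i 0) + complex.Im (x i 0) * complex.Im (y i 0)).

Lemma vnormE x : vnorm x = Num.sqrt (ns x). Proof. by []. Qed.
Lemma ns_ge0 x : 0 <= ns x. Proof. by apply: sumr_ge0 => i _; exact: nz_ge0. Qed.
Lemma vnorm_ge0 x : 0 <= vnorm x. Proof. exact: sqrtr_ge0. Qed.
Lemma vnorm_sq x : vnorm x ^+ 2 = ns x. Proof. by rewrite sqr_sqrtr // ns_ge0. Qed.
Lemma ns_ip x : ns x = ip x x.
Proof. by apply: eq_bigr => i _; rewrite /nz !expr2. Qed.
Lemma ip_sym x y : ip x y = ip y x.
Proof. by apply: eq_bigr => i _; rewrite mulrC [complex.Im _ * _]mulrC. Qed.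
Lemma nsD x y : ns (x + y) = ns x + 2 * ip x y + ns y.
Proof.
rewrite /ns /ip mulr_sumr -!big_split /=; apply: eq_bigr => i _.
rewrite !mxE /nz ReD ImD; ring.
Qed.
Lemma nsZ (t : R) x : ns ((t%:C)%C *: x) = t ^+ 2 * ns x.
Proof.
rewrite /ns mulr_sumr; apply: eq_bigr => i _.
rewrite !mxE /nz ReM ImM /=; ring.
Qed.
Lemma ipZ (t : R) x y : ip x ((t%:C)%C *: y) = t * ip x y.
Proof.
rewrite /ip mulr_sumr; apply: eq_bigr => i _.
rewrite !mxE ReM ImM /=; ring.
Qed.
Lemma nsZc z x : ns (z *: x) = nz z * ns x.
Proof.
rewrite /ns mulr_sumr; apply: eq_bigr => i _.
rewrite !mxE /nz ReM ImM /=; ring.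
Qed.

Lemma quad_disc (a b c : R) : 0 <= c ->
  (forall t, 0 <= a + 2 * t * b + t ^+ 2 * c) -> b ^+ 2 <= a * c.
Proof.
move=> c0 H; case: (ltrP 0 c) => cp.
  have := H (- b / c).
  have -> : a + 2 * (- b / c) * b + (- b / c) ^+ 2 * c = (a * c - b ^+ 2) / c.
    by field; rewrite gt_eqF.
  by rewrite pmulr_lge0 ?invr_gt0 // subr_ge0.
have c00 : c = 0 by apply/eqP; rewrite eq_le cp c0.
subst c; rewrite mulr0.
case: (eqVneq b 0) => [->|bn]; first by rewrite expr0n.
have := H (- (a + 1) / (2 * b)).
have -> : a + 2 * (- (a + 1) / (2 * b)) * b + (- (a + 1) / (2 * b)) ^+ 2 * 0 = -1.
  by field; rewrite bn.
by rewrite oppr_ge0 ler10.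
Qed.
Lemma CS x y : ip x y ^+ 2 <= ns x * ns y.
Proof.
apply: quad_disc; first exact: ns_ge0.
move=> t; have := ns_ge0 (x + (t%:C)%C *: y).
by rewrite nsD ipZ nsZ mulrA.
Qed.
Lemma ip_le x y : ip x y <= vnorm x * vnorm y.
Proof.
apply: (le_trans (ler_norm _)).
rewrite -sqrtr_sqr !vnormE -sqrtrM ?ns_ge0 //.
by rewrite ler_sqrt ?mulr_ge0 ?ns_ge0 // CS.
Qed.
Lemma vnormD x y : vnorm (x + y) <= vnorm x + vnorm y.
Proof.
rewrite {1}vnormE -(ger0_norm (addr_ge0 (vnorm_ge0 x) (vnorm_ge0 y))) -sqrtr_sqr.
rewrite ler_sqrt ?sqr_ge0 // nsD sqrrD !vnorm_sq.
have := ip_le x y; lra.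
Qed.
Lemma vnormZ (t : R) x : vnorm ((t%:C)%C *: x) = `|t| * vnorm x.
Proof. by rewrite !vnormE nsZ sqrtrM ?sqr_ge0 // sqrtr_sqr. Qed.
Lemma vnormZc z x : vnorm (z *: x) = Num.sqrt (nz z) * vnorm x.
Proof. by rewrite !vnormE nsZc sqrtrM ?nz_ge0. Qed.
Lemma vnormN x : vnorm (- x) = vnorm x.
Proof.
rewrite !vnormE /ns; congr Num.sqrt; apply: eq_bigr => i _.
by rewrite mxE /nz; case: (x i 0) => a b /=; rewrite !sqrrN.
Qed.
Lemma vnorm0 : vnorm (0 : 'cV[R[i]]_p) = 0.
Proof. by rewrite vnormE /ns big1 ?sqrtr0 // => i _; rewrite mxE /nz /= expr0n /= addr0. Qed.
Lemma nz_le x j : Num.sqrt (nz (x j 0)) <= vnorm x.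
Proof.
rewrite vnormE ler_sqrt ?ns_ge0 // /ns (bigD1 j) //= lerDl.
by apply: sumr_ge0 => i _; exact: nz_ge0.
Qed.
End V.
Lemma vnorm_sum (p : nat) (I : finType) (f : I -> 'cV[R[i]]_p) :
  vnorm (\sum_j f j) <= \sum_j vnorm (f j).
Proof.
elim/big_rec2: _ => [|j y1 y2 _ IH]; first by rewrite vnorm0.
exact: le_trans (vnormD _ _) (lerD (lexx _) IH).
Qed.

Lemma mulmx_cols m p (M : 'M[R[i]]_(m, p)) (x : 'cV[R[i]]_p) :
  M *m x = \sum_j x j 0 *: col j M.
Proof.
apply/matrixP => a b; rewrite !mxE summxE; apply: eq_bigr => j _.
by rewrite !mxE (ord1 b) mulrC.
Qed.

Definition crude m p (M : 'M[R[i]]_(m, p)) : R := \sum_j vnorm (col j M).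

Lemma crude_ge0 m p (M : 'M[R[i]]_(m, p)) : 0 <= crude M.
Proof. by apply: sumr_ge0 => j _; exact: vnorm_ge0. Qed.

Lemma crude_bound m p (M : 'M[R[i]]_(m, p)) x : vnorm (M *m x) <= crude M * vnorm x.
Proof.
rewrite mulmx_cols; apply: (le_trans (vnorm_sum _)).
rewrite /crude mulr_suml; apply: ler_sum => j _.
rewrite vnormZc mulrC ler_wpM2l ?vnorm_ge0 //; exact: nz_le.
Qed.
Section SN.
Variables m p : nat.
Implicit Types M : 'M[R[i]]_(m, p).
Definition SE M : set R := fun t => exists x : 'cV[R[i]]_p, vnorm x <= 1 /\ t = vnorm (M *m x).
Lemma SE0 M : SE M 0.
Proof. exists 0; split; [by rewrite vnorm0 ler01 | by rewrite mulmx0 vnorm0]. Qed.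
Lemma SE_sup M : has_sup (SE M).
Proof.
split; first by exists 0; exact: SE0.
exists (crude M) => t [x [x1 ->]].
apply: (le_trans (crude_bound _ _)).
by rewrite ler_piMr ?crude_ge0.
Qed.
Lemma specnorm_ge0 M : 0 <= specnorm M.
Proof. exact: (sup_upper_bound (SE_sup M) (SE0 M)). Qed.
Lemma specnormP M x : vnorm (M *m x) <= specnorm M * vnorm x.
Proof.
have := vnorm_ge0 x; rewrite le_eqVlt => /orP[/eqP x0|xp].
  by apply: (le_trans (crude_bound _ _)); rewrite -x0 !mulr0.
set u := (((vnorm x)^-1)%:C)%C *: x.
have u1 : vnorm u = 1 by rewrite vnormZ ger0_norm ?invr_ge0 ?(ltW xp) // mulVf // gt_eqF.
have : SE M (vnorm (M *m u)) by exists u; rewrite u1.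
move/(sup_upper_bound (SE_sup M)).
rewrite /u -scalemxAr vnormZ ger0_norm ?invr_ge0 ?(ltW xp) //.
rewrite -[specnorm M]/(sup (SE M)).
by rewrite ler_pdivrMl // mulrC.
Qed.
Lemma specnorm_le M (K : R) : 0 <= K -> (forall x, vnorm (M *m x) <= K * vnorm x) -> specnorm M <= K.
Proof.
move=> K0 H; apply: ge_sup; first by exists 0; exact: SE0.
move=> t [x [x1 ->]]; apply: (le_trans (H x)).
by rewrite ler_piMr.
Qed.
End SN.
Lemma specnormD m p (M N : 'M[R[i]]_(m, p)) : specnorm (M + N) <= specnorm M + specnorm N.
Proof.
apply: specnorm_le; first by rewrite addr_ge0 ?specnorm_ge0.
move=> x; rewrite mulmxDl mulrDl; apply: (le_trans (vnormD _ _)).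
by rewrite lerD ?specnormP.
Qed.
Lemma specnormM m p q (M : 'M[R[i]]_(m, p)) (N : 'M[R[i]]_(p, q)) :
  specnorm (M *m N) <= specnorm M * specnorm N.
Proof.
apply: specnorm_le; first by rewrite mulr_ge0 ?specnorm_ge0.
move=> x; rewrite -mulmxA -mulrA; apply: (le_trans (specnormP _ _)).
by rewrite ler_wpM2l ?specnorm_ge0 ?specnormP.
Qed.
Lemma specnormN m p (M : 'M[R[i]]_(m, p)) : specnorm (- M) = specnorm M.
Proof.
have H : forall N : 'M[R[i]]_(m, p), specnorm (- N) <= specnorm N.
  move=> N; apply: specnorm_le; first exact: specnorm_ge0.
  by move=> x; rewrite mulNmx vnormN specnormP.
by apply/eqP; rewrite eq_le H /= -{1}(opprK M) H.
Qed.
Lemma specnormZle m p (t : R) (M : 'M[R[i]]_(m, p)) : specnorm ((t%:C)%C *: M) <= `|t| * specnorm M.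
Proof.
apply: specnorm_le; first by rewrite mulr_ge0 ?specnorm_ge0.
by move=> x; rewrite -scalemxAl vnormZ -mulrA ler_wpM2l ?specnormP.
Qed.
Lemma CinvK (t : R) : t != 0 -> (t^-1%:C)%C * (t%:C)%C = 1.
Proof. by move=> t0; rewrite -rmorphM mulVf. Qed.
Lemma specnormZ m p (t : R) (M : 'M[R[i]]_(m, p)) : specnorm ((t%:C)%C *: M) = `|t| * specnorm M.
Proof.
apply/eqP; rewrite eq_le specnormZle /=.
case: (eqVneq t 0) => [->|t0]; first by rewrite normr0 mul0r specnorm_ge0.
have := specnormZle (t^-1) ((t%:C)%C *: M).
rewrite scalerA CinvK // scale1r normrV ?unitfE //.
rewrite -(ler_pM2l (_ : 0 < `|t|)) ?normr_gt0 //.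
by rewrite mulrA mulfV ?normr_eq0 // mul1r.
Qed.
Lemma specnorm1 m : specnorm (1%:M : 'M[R[i]]_m) <= 1.
Proof. by apply: specnorm_le => // x; rewrite mul1mx mul1r. Qed.
Lemma specnorm0 m p : specnorm (0 : 'M[R[i]]_(m, p)) = 0.
Proof.
apply/eqP; rewrite eq_le specnorm_ge0 andbT.
by apply: specnorm_le => // x; rewrite mul0mx vnorm0 mul0r.
Qed.
Lemma ctrans_mul m p q (A : 'M[R[i]]_(m, p)) (B : 'M[R[i]]_(p, q)) :
  ctrans (A *m B) = ctrans B *m ctrans A.
Proof. by rewrite /ctrans trmx_mul map_mxM. Qed.
Lemma ctransD m p (A B : 'M[R[i]]_(m, p)) : ctrans (A + B) = ctrans A + ctrans B.
Proof. by apply/matrixP => a b; rewrite !mxE rmorphD. Qed.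
Lemma ctransK m p (A : 'M[R[i]]_(m, p)) : ctrans (ctrans A) = A.
Proof. by apply/matrixP => a b; rewrite !mxE conjcK. Qed.
Lemma ReS (I : Type) (r : seq I) (P : pred I) (F : I -> R[i]) :
  complex.Re (\sum_(j <- r | P j) F j) = \sum_(j <- r | P j) complex.Re (F j).
Proof. exact: (big_morph _ ReD Re0). Qed.
Lemma ipE p (u v : 'cV[R[i]]_p) : ip u v = complex.Re ((ctrans u *m v) 0 0).
Proof.
rewrite /ip mxE ReS; apply: eq_bigr => j _.
by rewrite !mxE ReM ReJ ImJ mulNr opprK.
Qed.
Lemma ip_adj m p (M : 'M[R[i]]_(m, p)) (u : 'cV[R[i]]_m) (v : 'cV[R[i]]_p) :
  ip u (M *m v) = ip (ctrans M *m u) v.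
Proof. by rewrite !ipE ctrans_mul ctransK mulmxA. Qed.
Lemma specnorm_ctrans_le m p (M : 'M[R[i]]_(m, p)) : specnorm (ctrans M) <= specnorm M.
Proof.
apply: specnorm_le; first exact: specnorm_ge0.
move=> x; set y := ctrans M *m x.
have H : vnorm y ^+ 2 <= specnorm M * vnorm x * vnorm y.
  rewrite vnorm_sq ns_ip {1}/y -ip_adj.
  apply: (le_trans (ip_le _ _)).
  rewrite [specnorm M * _]mulrC -mulrA ler_wpM2l ?vnorm_ge0 //.
  exact: specnormP.
have := vnorm_ge0 y; rewrite le_eqVlt => /orP[/eqP <-|yp].
  by rewrite mulr_ge0 ?vnorm_ge0 ?specnorm_ge0.
by move: H; rewrite expr2 ler_pM2r.
Qed.
Lemma specnorm_ctrans m p (M : 'M[R[i]]_(m, p)) : specnorm (ctrans M) = specnorm M.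
Proof.
apply/eqP; rewrite eq_le specnorm_ctrans_le /=.
by rewrite -{1}(ctransK M) specnorm_ctrans_le.
Qed.
Lemma zmod_rearr (V : zmodType) (a b c d f : V) :
  (a + b) + (c + d) - f = (a - f) + (b + c + d).
Proof. rewrite -!addrA; congr (_ + _); rewrite [RHS]addrCA; congr (_ + _); rewrite [RHS]addrCA; congr (_ + _); exact: addrC. Qed.

Lemma Did n r (C : 'M[R[i]]_n) (W X e : 'M[R[i]]_(n, r)) :
  (C *m W + e) *m ctrans (C *m W + e) - (C *m X) *m ctrans (C *m X) =
  C *m (W *m ctrans W - X *m ctrans X) *m ctrans C +
  ((C *m W) *m ctrans e + e *m ctrans (C *m W) + e *m ctrans e).
Proof.
rewrite ctransD mulmxDl !mulmxDr !ctrans_mul mulmxN mulmxDl mulNmx !mulmxA.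
exact: zmod_rearr.
Qed.

Lemma final_ineq (w x y c J eps : R) : 0 <= w -> 0 <= y -> 0 <= x -> 0 <= c -> c <= 2 ->
  x <= c * y -> 0 < J -> 0 < eps ->
  y <= 2^-1 * (Num.sqrt (w ^+ 2 + 2 * eps / (c * J)) - w) ->
  2 * w * x + x ^+ 2 <= eps / J.
Proof.
move=> w0 y0 x0 c0 c2 xc J0 e0 hy.
have eJ : 0 <= eps / J by rewrite divr_ge0 // ltW.
case: (eqVneq c 0) => [c00|cn0].
  have -> : x = 0 by apply/eqP; rewrite eq_le x0 andbT; move: xc; rewrite c00 mul0r.
  by rewrite mulr0 expr0n /= addr0.
have cp : 0 < c by rewrite lt_def cn0 c0.
set D := 2 * eps / (c * J).
have D0 : 0 <= D by rewrite /D divr_ge0 ?mulr_ge0 ?(ltW J0) ?(ltW e0).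
have cD : c * D = 2 * (eps / J) by rewrite /D; field; rewrite ?gt_eqF.
set q := Num.sqrt (w ^+ 2 + D).
have q2 : q ^+ 2 = w ^+ 2 + D by rewrite sqr_sqrtr // addr_ge0 ?sqr_ge0.
have q0 : 0 <= q by exact: sqrtr_ge0.
have h1 : 2 * y + w <= q by move: hy; rewrite -/q; lra.
have h2 : (2 * y + w) ^+ 2 <= q ^+ 2.
  by rewrite ler_pXn2r // ?nnegrE ?addr_ge0 ?mulr_ge0.
have h3 : 4 * y ^+ 2 + 4 * w * y <= D by move: h2; rewrite q2; nra.
have h4 : x ^+ 2 <= c * 2 * y ^+ 2.
  have : x ^+ 2 <= (c * y) ^+ 2 by rewrite ler_pXn2r // ?nnegrE ?mulr_ge0.
  rewrite exprMn => hh; apply: (le_trans hh).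
  have hc : c ^+ 2 <= c * 2 by rewrite expr2 ler_wpM2l.
  have := ler_wpM2r (sqr_ge0 y) hc; lra.
have h5 : 2 * w * x <= 2 * w * (c * y) by rewrite ler_wpM2l ?mulr_ge0.
have h6 : c * (4 * y ^+ 2 + 4 * w * y) <= c * D by rewrite ler_wpM2l.
nra.
Qed.
Lemma gam2 (a : R[i]) : complex.Re a < 0 -> gam a ^+ 2 = - 2 * complex.Re a.
Proof. by move=> h; rewrite /gam sqr_sqrtr //; lra. Qed.

Lemma conj_shift (a : R[i]) : complex.Re a < 0 ->
  - conjc a = a + ((gam a ^+ 2)%:C)%C.
Proof.
move=> h; rewrite gam2 //; case: a h => x y /= _.
by apply/eqP; rewrite eq_complex /= !addr0 opprK eqxx andbT; apply/eqP; ring.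
Qed.

Lemma cayley_eq n (A : 'M[R]_n) (a : R[i]) : complex.Re a < 0 ->
  shiftA A a \in unitmx ->
  cayley A a = 1%:M + ((gam a ^+ 2)%:C)%C *: invmx (shiftA A a).
Proof.
move=> h u; rewrite /cayley.
have -> : cmx A - (conjc a)%:M = shiftA A a + (((gam a ^+ 2)%:C)%C)%:M.
  by rewrite /shiftA -addrA -raddfN /= conj_shift // raddfD.
by rewrite mulmxDr mulVmx // mul_mx_scalar.
Qed.

Lemma step_eq n r (A : 'M[R]_n) (B : 'M[R]_(n, r)) (alpha : nat -> R[i])
  (v : nat -> 'M[R[i]]_(n, r)) k :
  complex.Re (alpha k.+1) < 0 -> shiftA A (alpha k.+1) \in unitmx ->
  w_inex B alpha v k.+1 = cayley A (alpha k.+1) *m w_inex B alpha v k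
     - ((gam (alpha k.+1) ^+ 2)%:C)%C *: (invmx (shiftA A (alpha k.+1)) *m s_res A B alpha v k.+1).
Proof.
move=> h u.
have hv : v k.+1 = invmx (shiftA A (alpha k.+1)) *m (w_inex B alpha v k - s_res A B alpha v k.+1).
  by rewrite /s_res /= opprB addrC subrK mulKmx.
rewrite cayley_eq // /= {1}hv mulmxDl mul1mx -scalemxAl mulmxBr scalerBr addrA.
by rewrite scalemxAl.
Qed.
Lemma comb (T T1 T234 T23 T2 T3 T4 cC d w x K E : R) :
  0 <= cC -> cC <= 1 -> 0 <= d -> 0 <= w -> 0 <= x ->
  T <= T1 + T234 -> T234 <= T23 + T4 -> T23 <= T2 + T3 ->
  T1 <= cC * d * cC -> T2 <= cC * w * x -> T3 <= x * (cC * w) -> T4 <= x * x ->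
  d <= K -> 2 * w * x + x ^+ 2 <= E -> T <= K + E.
Proof.
move=> c0 c1 d0 w0 x0 s1 s2 s3 h1 h2 h3 h4 hd hE.
have a1 : cC * d * cC <= d.
  have hh : cC * d <= d by rewrite ler_piMl.
  by apply: (le_trans (ler_wpM2r c0 hh)); rewrite ler_piMr.
have a2 : cC * w * x <= w * x.
  by rewrite ler_wpM2r // ler_piMl.
have a3 : x * (cC * w) <= w * x.
  by rewrite mulrC ler_wpM2r // ler_piMl.
have xx : x * x = x ^+ 2 by rewrite expr2.
lra.
Qed.
End S.


Theorem theorem3p7 (R : realType) (n r : nat) (A : 'M[R]_n) (B : 'M[R]_(n, r))
    (jmax : nat) (eps : R) (alpha : nat -> R[i]) (v : nat -> 'M[R[i]]_(n, r)) :
  (1 <= jmax)%N -> 0 < eps -> eps < 1 ->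
  (forall j, (1 <= j <= jmax)%N ->
     [/\ complex.Re (alpha j) < 0,
         shiftA A (alpha j) \in unitmx &
         specnorm (cayley A (alpha j)) < 1]) ->
  (forall k, (1 <= k <= jmax)%N ->
     specnorm (s_res A B alpha v k) <=
       2^-1 * (Num.sqrt (specnorm (w_inex B alpha v k.-1) ^+ 2
                 + 2 * eps / (specnorm (invmx (shiftA A (alpha k)))
                              * gam (alpha k) ^+ 2 * jmax%:R))
               - specnorm (w_inex B alpha v k.-1))) ->
  specnorm (w_inex B alpha v jmax *m ctrans (w_inex B alpha v jmax))
    <= specnorm (w_exact A B alpha jmax *m ctrans (w_exact A B alpha jmax)) + eps.
Proof.
move=> j1 e0 _ Hs Hk.
have J0 : 0 < (jmax%:R : R) by rewrite ltr0n.
pose D k := w_inex B alpha v k *m ctrans (w_inex B alpha v k)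
          - w_exact A B alpha k *m ctrans (w_exact A B alpha k).
have HD : forall k, (k <= jmax)%N -> specnorm (D k) <= k%:R * (eps / jmax%:R).
  elim => [_|k IH kJ]; first by rewrite /D /= subrr specnorm0 mul0r.
  have kJ' : (k <= jmax)%N by apply: ltnW.
  have [hre hu hC] := Hs k.+1 kJ.
  have hy := Hk k.+1 kJ; rewrite /= in hy.
  have IH' := IH kJ'.
  set C := cayley A (alpha k.+1) in hC hy.
  set Inv := invmx (shiftA A (alpha k.+1)) in hy.
  set g := gam (alpha k.+1) ^+ 2 in hy.
  set s := s_res A B alpha v k.+1 in hy.
  set W := w_inex B alpha v k in hy.
  set e := - ((g%:C)%C *: (Inv *m s)).
  Time have hW : w_inex B alpha v k.+1 = C *m W + e by rewrite (@step_eq _ _ _ A B alpha v k) //.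
  have hX : w_exact A B alpha k.+1 = C *m w_exact A B alpha k := erefl.
  have gp : 0 < g by rewrite /g gam2 // mulNr -mulrN mulr_gt0 // oppr_gt0.
  Time rewrite /D hW hX Did -/(D k).
  Time have h1 : specnorm (C *m D k *m ctrans C) <= specnorm C * specnorm (D k) * specnorm C.
    have := specnormM (C *m D k) (ctrans C); rewrite specnorm_ctrans => hA.
    apply: (le_trans hA); apply: ler_wpM2r; [exact: specnorm_ge0 | exact: specnormM].
  Time have hP : specnorm (C *m W) <= specnorm C * specnorm W by apply: specnormM.
  Time have h2 : specnorm (C *m W *m ctrans e) <= specnorm C * specnorm W * specnorm e.
    have := specnormM (C *m W) (ctrans e); rewrite specnorm_ctrans => hA.
    apply: (le_trans hA); apply: ler_wpM2r; [exact: specnorm_ge0 | exact: hP].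
  Time have h3 : specnorm (e *m ctrans (C *m W)) <= specnorm e * (specnorm C * specnorm W).
    have := specnormM e (ctrans (C *m W)); rewrite specnorm_ctrans => hA.
    apply: (le_trans hA); apply: ler_wpM2l; [exact: specnorm_ge0 | exact: hP].
  Time have h4 : specnorm (e *m ctrans e) <= specnorm e * specnorm e.
    by have := specnormM e (ctrans e); rewrite specnorm_ctrans.
  have hx : specnorm e <= specnorm Inv * g * specnorm s.
    rewrite /e specnormN specnormZ (ger0_norm (ltW gp)).
    apply: (le_trans (ler_wpM2l (ltW gp) (specnormM Inv s))).
    rewrite mulrA [specnorm Inv * _]mulrC; exact: lexx.
  have hc : specnorm Inv * g <= 2.
    have -> : specnorm Inv * g = specnorm ((g%:C)%C *: Inv).
      by rewrite specnormZ (ger0_norm (ltW gp)) mulrC.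
    have hCI : C = 1%:M + (g%:C)%C *: Inv := cayley_eq hre hu.
    have -> : (g%:C)%C *: Inv = C + - 1%:M by rewrite hCI addrC addKr.
    apply: (le_trans (specnormD _ _)); rewrite specnormN.
    have hh := lerD (ltW hC) (@specnorm1 R n). apply: (le_trans hh). exact: lexx.
  have key := final_ineq (specnorm_ge0 W) (specnorm_ge0 s) (specnorm_ge0 e)
    (mulr_ge0 (specnorm_ge0 Inv) (ltW gp)) hc hx J0 e0 hy.
  rewrite -natr1 mulrDl mul1r.
  apply: (comb (specnorm_ge0 C) (ltW hC) (specnorm_ge0 (D k)) (specnorm_ge0 W) (specnorm_ge0 e)
    (specnormD _ _) (specnormD _ _) (specnormD _ _) h1 h2 h3 h4 IH' key).
have := HD jmax (leqnn _).
rewrite mulrC divfK; last by rewrite gt_eqF.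
move=> HJ.
have -> : w_inex B alpha v jmax *m ctrans (w_inex B alpha v jmax) =
  w_exact A B alpha jmax *m ctrans (w_exact A B alpha jmax) + D jmax by rewrite /D addrC subrK.
apply: (le_trans (specnormD _ _)); exact: lerD (lexx _) HJ.
Qed.
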